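(* Given $a,b,c\in\ell_\infty$, there is a continuous symmetric trilinear form $A\in\mathcal{L}_s(^3\ell_1)$ such that for every $z_1\in\ell_1''$ and all $z_2,z_3\in c_0^\perp\subseteq\ell_1''$, $$\tilde A(z_1,z_2,z_3)=z_1(a)\,z_2(b)\,z_3(c).$$
   Context: $\ell_1''=\ell_\infty'$ and $c_0^\perp\subseteq\ell_1''$ is the annihilator of $c_0\subseteq\ell_\infty$. For a continuous trilinear form $A$ on $\ell_1$, its canonical (Aron–Berner) extension is $\tilde A(z_1,z_2,z_3)=\lim_{\alpha}\lim_{\beta}\lim_{\gamma}A(x_\alpha,y_\beta,u_\gamma)$, where $(x_\alpha),(y_\beta),(u_\gamma)\subseteq\ell_1$ are nets weak-star converging to $z_1,z_2,z_3$ respectively, with limits taken from the last variable to the first. *)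

(* Defs.v *)
From Stdlib Require Import Reals.
From Coquelicot Require Import Coquelicot.
Open Scope R_scope.

Definition rseq := nat -> R.

Definition in_l1 (x : rseq) : Prop := ex_series (fun n => Rabs (x n)).
Definition l1norm (x : rseq) : R := Series (fun n => Rabs (x n)).
Definition in_linf (f : rseq) : Prop := exists M, forall n, Rabs (f n) <= M.
Definition in_c0 (f : rseq) : Prop := is_lim_seq f 0.

Definition pairing (x f : rseq) : R := Series (fun n => x n * f n).

(** z is an element of ell_1'' = (ell_infinity)': a linear functional on
    ell_infinity, bounded with respect to the sup norm. *)
Definition bidual (z : rseq -> R) : Prop :=
  (forall f g, in_linf f -> in_linf g -> z (fun n => f n + g n) = z f + z g) /\
  (forall (t : R) f, in_linf f -> z (fun n => t * f n) = t * z f) /\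
  (exists C, forall f M, in_linf f -> (forall n, Rabs (f n) <= M) ->
                          Rabs (z f) <= C * M).

Definition c0_perp (z : rseq -> R) : Prop :=
  bidual z /\ forall f, in_c0 f -> z f = 0.

Definition directed {I : Type} (le : I -> I -> Prop) : Prop :=
  (forall i, le i i) /\
  (forall i j k, le i j -> le j k -> le i k) /\
  inhabited I /\
  (forall i j, exists k, le i k /\ le j k).

Definition net_lim {I : Type} (le : I -> I -> Prop) (v : I -> R) (L : R) : Prop :=
  forall eps, 0 < eps -> exists i0, forall i, le i0 i -> Rabs (v i - L) < eps.

Definition weakstar_net {I : Type} (le : I -> I -> Prop) (x : I -> rseq)
    (z : rseq -> R) : Prop :=
  (forall i, in_l1 (x i)) /\
  forall f, in_linf f -> net_lim le (fun i => pairing (x i) f) (z f).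

Definition trilinear_l1 (A : rseq -> rseq -> rseq -> R) : Prop :=
  (forall x x' y u, in_l1 x -> in_l1 x' -> in_l1 y -> in_l1 u ->
     A (fun n => x n + x' n) y u = A x y u + A x' y u) /\
  (forall t x y u, in_l1 x -> in_l1 y -> in_l1 u ->
     A (fun n => t * x n) y u = t * A x y u) /\
  (forall x y y' u, in_l1 x -> in_l1 y -> in_l1 y' -> in_l1 u ->
     A x (fun n => y n + y' n) u = A x y u + A x y' u) /\
  (forall t x y u, in_l1 x -> in_l1 y -> in_l1 u ->
     A x (fun n => t * y n) u = t * A x y u) /\
  (forall x y u u', in_l1 x -> in_l1 y -> in_l1 u -> in_l1 u' ->
     A x y (fun n => u n + u' n) = A x y u + A x y u') /\
  (forall t x y u, in_l1 x -> in_l1 y -> in_l1 u ->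
     A x y (fun n => t * u n) = t * A x y u).

Definition continuous_trilinear_l1 (A : rseq -> rseq -> rseq -> R) : Prop :=
  trilinear_l1 A /\
  exists C, forall x y u, in_l1 x -> in_l1 y -> in_l1 u ->
    Rabs (A x y u) <= C * l1norm x * l1norm y * l1norm u.

Definition symmetric_l1 (A : rseq -> rseq -> rseq -> R) : Prop :=
  forall x y u, in_l1 x -> in_l1 y -> in_l1 u ->
    A x y u = A y x u /\ A x y u = A x u y /\ A x y u = A u y x.

(** Ã(z1,z2,z3) = v, where Ã is the Aron–Berner extension: for all nets
    x -> z1, y -> z2, u -> z3 weak-star, the iterated limit
    lim_i lim_j lim_k A(x_i, y_j, u_k) (innermost = last variable) exists
    and equals v. *)
Definition aron_berner_eq (A : rseq -> rseq -> rseq -> R)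
    (z1 z2 z3 : rseq -> R) (v : R) : Prop :=
  forall (I J K : Type) (leI : I -> I -> Prop) (leJ : J -> J -> Prop)
         (leK : K -> K -> Prop) (x : I -> rseq) (y : J -> rseq) (u : K -> rseq),
    directed leI -> directed leJ -> directed leK ->
    weakstar_net leI x z1 -> weakstar_net leJ y z2 -> weakstar_net leK u z3 ->
    exists (L : I -> J -> R) (M : I -> R),
      (forall i j, net_lim leK (fun k => A (x i) (y j) (u k)) (L i j)) /\
      (forall i, net_lim leJ (L i) (M i)) /\
      net_lim leI M v.

(* Main.v *)
Require Import Defs.
From Stdlib Require Import Reals Lra Lia Arith FunctionalExtensionality.
From Coquelicot Require Import Coquelicot.
Open Scope R_scope.

Fixpoint psum (f : nat -> R) (k : nat) : R :=
  match k with O => 0 | S k => psum f k + f k end.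

Lemma psum_sum_n f N : psum f (S N) = sum_n f N.
Proof.
  induction N as [|N IH].
  - rewrite sum_O; simpl; ring.
  - rewrite sum_Sn. change (psum f (S N) + f (S N) = sum_n f N + f (S N)).
    rewrite IH; ring.
Qed.

Lemma psum_ext f g N : (forall n, f n = g n) -> psum f N = psum g N.
Proof. intros H; induction N; simpl; [ring| rewrite IHN, H; ring]. Qed.

Lemma psum_plus f g N : psum (fun n => f n + g n) N = psum f N + psum g N.
Proof. induction N; simpl; [ring| rewrite IHN; ring]. Qed.

Lemma psum_scal t f N : psum (fun n => t * f n) N = t * psum f N.
Proof. induction N; simpl; [ring| rewrite IHN; ring]. Qed.

Lemma psum_le f g N : (forall n, f n <= g n) -> psum f N <= psum g N.
Proof. intros H; induction N; simpl; [lra| specialize (H N); lra]. Qed.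

Lemma psum_abs f N : Rabs (psum f N) <= psum (fun n => Rabs (f n)) N.
Proof.
  induction N; simpl. rewrite Rabs_R0; lra.
  eapply Rle_trans. apply Rabs_triang. lra.
Qed.

Lemma psum_nonneg f N : (forall n, 0 <= f n) -> 0 <= psum f N.
Proof. intros H; induction N; simpl; [lra| specialize (H N); lra]. Qed.

Lemma psum_mono f N m : (forall n, 0 <= f n) -> psum f N <= psum f (m + N).
Proof. intros H; induction m; simpl; [lra| specialize (H (m+N)%nat); lra]. Qed.

Lemma psum_single f N n : (forall n, 0 <= f n) -> (n < N)%nat -> f n <= psum f N.
Proof.
  intros H Hn; induction N. lia.
  simpl. destruct (Nat.eq_dec n N). subst. pose proof (psum_nonneg f N H); lra.
  assert (n < N)%nat by lia. specialize (IHN H0). specialize (H N). lra.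
Qed.

Lemma psum_lim f : ex_series f -> is_lim_seq (psum f) (Series f).
Proof.
  intros H. apply is_lim_seq_incr_1.
  apply is_lim_seq_ext with (sum_n f). intros; now rewrite psum_sum_n.
  apply Series_correct in H. exact H.
Qed.

Lemma psum_is_series f l : is_lim_seq (psum f) (Finite l) -> is_series f l.
Proof.
  intros H. apply is_lim_seq_incr_1 in H.
  assert (H' : is_lim_seq (sum_n f) l).
  { apply is_lim_seq_ext with (fun n => psum f (S n)). intros; apply psum_sum_n. exact H. }
  exact H'.
Qed.

Lemma psum_le_Series f N : (forall n, 0 <= f n) -> ex_series f -> psum f N <= Series f.
Proof.
  intros H E. pose proof (psum_lim f E) as L.
  apply (is_lim_seq_incr_n _ N) in L.
  assert (Hc := is_lim_seq_const (psum f N)).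
  pose proof (is_lim_seq_le _ _ _ _ (fun m => psum_mono f N m H) Hc L). simpl in H0. exact H0.
Qed.



Lemma conv_linf f l : is_lim_seq f (Finite l) -> in_linf f.
Proof.
  intros H. apply is_lim_seq_spec in H.
  destruct (H (mkposreal 1 Rlt_0_1)) as [N HN]. simpl in HN.
  exists (psum (fun n => Rabs (f n)) N + Rabs l + 1). intros n.
  destruct (le_lt_dec N n) as [h|h].
  - specialize (HN n h). pose proof (psum_nonneg (fun n => Rabs (f n)) N (fun n => Rabs_pos _)).
    pose proof (Rabs_triang_inv (f n) l). lra.
  - pose proof (psum_single (fun n => Rabs (f n)) N n (fun n => Rabs_pos _) h). simpl in H0.
    pose proof (Rabs_pos l). lra.
Qed.

Lemma c0_linf f : in_c0 f -> in_linf f.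
Proof. apply conv_linf. Qed.

Lemma linf_pos f : in_linf f -> exists M, 0 <= M /\ forall n, Rabs (f n) <= M.
Proof. intros [M H]. exists M. split; auto. eapply Rle_trans; [apply Rabs_pos|apply (H O)]. Qed.

Lemma linf_mul f g : in_linf f -> in_linf g -> in_linf (fun n => f n * g n).
Proof.
  intros Hf Hg. apply linf_pos in Hf as [M [HM Hf]]. apply linf_pos in Hg as [K [HK Hg]].
  exists (M*K). intros n. rewrite Rabs_mult. apply Rmult_le_compat; auto using Rabs_pos.
Qed.

Lemma linf_plus f g : in_linf f -> in_linf g -> in_linf (fun n => f n + g n).
Proof.
  intros [M Hf] [K Hg]. exists (M+K). intros n. eapply Rle_trans. apply Rabs_triang.
  specialize (Hf n); specialize (Hg n); lra.
Qed.

Lemma c0_mul f g : in_linf f -> in_c0 g -> in_c0 (fun n => f n * g n).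
Proof.
  intros Hf Hg. apply linf_pos in Hf as [M [HM Hf]]. unfold in_c0 in *.
  apply is_lim_seq_spec in Hg. apply is_lim_seq_spec. intros eps.
  assert (He : 0 < eps / (M+1)). { apply Rdiv_lt_0_compat. apply cond_pos. lra. }
  destruct (Hg (mkposreal _ He)) as [N HN]. exists N. intros n hn. specialize (HN n hn). simpl in HN.
  rewrite Rminus_0_r in *. rewrite Rabs_mult.
  apply Rle_lt_trans with (M * (eps/(M+1))).
  apply Rmult_le_compat; auto using Rabs_pos. lra.
  pose proof (cond_pos eps). apply Rlt_le_trans with ((M+1) * (eps/(M+1))).
  apply Rmult_lt_compat_r; [exact He| lra]. right; field; lra.
Qed.

Lemma c0_plus f g : in_c0 f -> in_c0 g -> in_c0 (fun n => f n + g n).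
Proof. intros Hf Hg. unfold in_c0 in *. replace 0 with (0+0) by ring. now apply is_lim_seq_plus'. Qed.

Lemma c0_shift f : in_c0 f -> in_c0 (fun n => f (S n)).
Proof. intros H. unfold in_c0 in *. now apply is_lim_seq_incr_1 in H. Qed.


Lemma ex_le (a b : nat -> R) : (forall n, Rabs (a n) <= b n) -> ex_series b -> ex_series a.
Proof. intros H1 H2. apply (@ex_series_le R_AbsRing R_CompleteNormedModule a b); auto. Qed.

Lemma ex_scal (c : R) (a : nat -> R) : ex_series a -> ex_series (fun n => c * a n).
Proof. intros H. apply (@ex_series_scal_l R_AbsRing R_NormedModule c a H). Qed.

Lemma ex_plus (a b : nat -> R) : ex_series a -> ex_series b -> ex_series (fun n => a n + b n).
Proof. intros H1 H2. apply (@ex_series_plus R_AbsRing R_NormedModule a b H1 H2). Qed.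

Lemma l1_linf_abs x f : in_l1 x -> in_linf f -> ex_series (fun n => Rabs (x n * f n)).
Proof.
  intros Hx Hf. apply linf_pos in Hf as [M [HM Hf]].
  apply (ex_le _ (fun n => M * Rabs (x n))).
  intros n. rewrite Rabs_Rabsolu, Rabs_mult.
  rewrite Rmult_comm. apply Rmult_le_compat_r; auto using Rabs_pos.
  apply (ex_scal M) in Hx. exact Hx.
Qed.

Lemma l1_linf x f : in_l1 x -> in_linf f -> in_l1 (fun n => x n * f n).
Proof. apply l1_linf_abs. Qed.

Lemma l1_ex x : in_l1 x -> ex_series x.
Proof. apply ex_series_Rabs. Qed.

Lemma l1_plus x y : in_l1 x -> in_l1 y -> in_l1 (fun n => x n + y n).
Proof.
  intros Hx Hy. apply (ex_le _ (fun n => Rabs (x n) + Rabs (y n))).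
  intros n. rewrite Rabs_Rabsolu. apply Rabs_triang.
  apply (ex_plus _ _ Hx Hy).
Qed.

Lemma l1_scal t x : in_l1 x -> in_l1 (fun n => t * x n).
Proof.
  intros Hx. apply (ex_le _ (fun n => Rabs t * Rabs (x n))).
  intros n. rewrite Rabs_Rabsolu, Rabs_mult; lra.
  apply (ex_scal (Rabs t) _ Hx).
Qed.

Lemma psum_linf f : ex_series f -> in_linf (psum f).
Proof. intros H. exact (conv_linf _ _ (psum_lim f H)). Qed.

Definition tl (p : rseq) (m : nat) : R := Series p - psum p m.

Lemma tl_c0 p : ex_series p -> in_c0 (tl p).
Proof.
  intros H. unfold in_c0, tl. replace 0 with (Series p - Series p) by ring.
  apply is_lim_seq_minus'. apply is_lim_seq_const. now apply psum_lim.
Qed.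

Lemma exch p q : in_l1 p -> in_l1 q ->
  Series (fun k => p k * psum q k) = Series (fun j => q j * tl p (S j)).
Proof.
  intros Hp Hq.
  assert (Hid : forall N, psum (fun k => p k * psum q k) N =
     psum (fun j => q j * tl p (S j)) N - tl p N * psum q N).
  { induction N. simpl. ring. simpl. rewrite IHN. unfold tl. simpl. ring. }
  assert (Ht : in_c0 (fun j => tl p (S j))) by (apply c0_shift, tl_c0, l1_ex, Hp).
  assert (Hex : ex_series (fun j => q j * tl p (S j))) by (apply l1_ex, l1_linf; auto using c0_linf).
  apply is_series_unique. apply psum_is_series.
  apply is_lim_seq_ext with (fun N => psum (fun j => q j * tl p (S j)) N - tl p N * psum q N).
  intros; now rewrite Hid.
  replace (Series (fun j => q j * tl p (S j))) with (Series (fun j => q j * tl p (S j)) - 0 * Series q) by ring.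
  apply is_lim_seq_minus'. now apply psum_lim.
  apply is_lim_seq_mult'. apply tl_c0, l1_ex, Hp. apply psum_lim, l1_ex, Hq.
Qed.

Definition Pre (a x : rseq) (j : nat) : R := psum (fun i => x i * a i) j.
Definition B (a b x y : rseq) (k : nat) : R :=
  psum (fun j => b j * (y j * Pre a x j + x j * Pre a y j)) k.
Definition term (a b c x y u : rseq) (k : nat) : R :=
  c k * (u k * B a b x y k + y k * B a b x u k + x k * B a b y u k).
Definition Aform (a b c x y u : rseq) : R := Series (term a b c x y u).

Lemma B_sym a b x y k : B a b x y k = B a b y x k.
Proof. unfold B. apply psum_ext. intros; ring. Qed.

Lemma term_sym12 a b c x y u k : term a b c x y u k = term a b c y x u k.
Proof. unfold term. rewrite (B_sym a b x y), (B_sym a b x u), (B_sym a b y u). ring. Qed.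
Lemma term_sym23 a b c x y u k : term a b c x y u k = term a b c x u y k.
Proof. unfold term. rewrite (B_sym a b y u). ring. Qed.
Lemma term_sym13 a b c x y u k : term a b c x y u k = term a b c u y x k.
Proof. unfold term. rewrite (B_sym a b x y), (B_sym a b x u), (B_sym a b y u). ring. Qed.

Lemma Pre_plus a x x' j : Pre a (fun n => x n + x' n) j = Pre a x j + Pre a x' j.
Proof. unfold Pre. rewrite <- psum_plus. apply psum_ext; intros; ring. Qed.
Lemma Pre_scal a t x j : Pre a (fun n => t * x n) j = t * Pre a x j.
Proof. unfold Pre. rewrite <- psum_scal. apply psum_ext; intros; ring. Qed.

Lemma B_plus a b x x' y k : B a b (fun n => x n + x' n) y k = B a b x y k + B a b x' y k.
Proof. unfold B. rewrite <- psum_plus. apply psum_ext; intros. rewrite Pre_plus. ring. Qed.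
Lemma B_scal a b t x y k : B a b (fun n => t * x n) y k = t * B a b x y k.
Proof. unfold B. rewrite <- psum_scal. apply psum_ext; intros. rewrite Pre_scal. ring. Qed.

Lemma term_plus a b c x x' y u k :
  term a b c (fun n => x n + x' n) y u k = term a b c x y u k + term a b c x' y u k.
Proof.
  unfold term. rewrite !B_plus. ring.
Qed.
Lemma term_scal a b c t x y u k :
  term a b c (fun n => t * x n) y u k = t * term a b c x y u k.
Proof.
  unfold term. rewrite !B_scal. ring.
Qed.

Lemma l1_ext f g : (forall n, f n = g n) -> in_l1 f -> in_l1 g.
Proof. intros H Hf. unfold in_l1 in *. apply ex_series_ext with (fun n => Rabs (f n)); auto. intros; now rewrite H. Qed.

Lemma Pre_linf a x : in_linf a -> in_l1 x -> in_linf (Pre a x).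
Proof. intros Ha Hx. apply psum_linf, l1_ex, l1_linf; auto. Qed.

Lemma Pre_lim a x : in_linf a -> in_l1 x -> is_lim_seq (Pre a x) (pairing x a).
Proof. intros Ha Hx. apply psum_lim, l1_ex, l1_linf; auto. Qed.

Lemma Bf_l1 a b x y : in_linf a -> in_linf b -> in_l1 x -> in_l1 y ->
  in_l1 (fun j => b j * (y j * Pre a x j + x j * Pre a y j)).
Proof.
  intros Ha Hb Hx Hy.
  apply l1_ext with (fun j => y j * (b j * Pre a x j) + x j * (b j * Pre a y j)). intros; ring.
  apply l1_plus; apply l1_linf; auto; apply linf_mul; auto; apply Pre_linf; auto.
Qed.

Definition Binf (a b x y : rseq) : R := Series (fun j => b j * (y j * Pre a x j + x j * Pre a y j)).

Lemma B_lim a b x y : in_linf a -> in_linf b -> in_l1 x -> in_l1 y -> is_lim_seq (B a b x y) (Binf a b x y).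
Proof. intros. apply psum_lim, l1_ex, Bf_l1; auto. Qed.

Lemma B_linf a b x y : in_linf a -> in_linf b -> in_l1 x -> in_l1 y -> in_linf (B a b x y).
Proof. intros. eapply conv_linf, B_lim; auto. Qed.

Lemma term_ex a b c x y u : in_linf a -> in_linf b -> in_linf c -> in_l1 x -> in_l1 y -> in_l1 u ->
  ex_series (term a b c x y u).
Proof.
  intros. apply l1_ex.
  apply l1_ext with (fun k => (u k * (c k * B a b x y k) + y k * (c k * B a b x u k)) + x k * (c k * B a b y u k)).
  intros; unfold term; ring.
  repeat apply l1_plus; apply l1_linf; auto; apply linf_mul; auto; apply B_linf; auto.
Qed.

Definition gW (a b c w x : rseq) (k : nat) : R :=
  b k * Pre a x k * tl (fun j => w j * c j) (S k)
  + a k * tl (fun j => b j * x j * tl (fun i => w i * c i) (S j)) (S k).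

Lemma tlS_linf p : in_l1 p -> in_linf (fun j => tl p (S j)).
Proof. intros; apply c0_linf, c0_shift, tl_c0, l1_ex; auto. Qed.

Lemma gW_c0 a b c w x : in_linf a -> in_linf b -> in_linf c -> in_l1 w -> in_l1 x -> in_c0 (gW a b c w x).
Proof.
  intros Ha Hb Hc Hw Hx. unfold gW. apply c0_plus.
  - apply c0_mul. apply linf_mul; auto. apply Pre_linf; auto.
    apply c0_shift, tl_c0, l1_ex, l1_linf; auto.
  - apply c0_mul; auto. apply c0_shift, tl_c0, l1_ex.
    apply l1_ext with (fun j => x j * (b j * tl (fun i => w i * c i) (S j))). intros; ring.
    apply l1_linf; auto. apply linf_mul; auto. apply tlS_linf, l1_linf; auto.
Qed.

Lemma W_rep a b c w x u : in_linf a -> in_linf b -> in_linf c -> in_l1 w -> in_l1 x -> in_l1 u ->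
  Series (fun k => (w k * c k) * B a b x u k) = Series (fun k => u k * gW a b c w x k).
Proof.
  intros Ha Hb Hc Hw Hx Hu.
  set (p := fun j => w j * c j).
  set (q1 := fun j => u j * (b j * Pre a x j)).
  set (q2 := fun j => (b j * x j) * Pre a u j).
  assert (Hp : in_l1 p) by (apply l1_linf; auto).
  assert (Hq1 : in_l1 q1) by (apply l1_linf; auto; apply linf_mul; auto; apply Pre_linf; auto).
  assert (HB : forall k, B a b x u k = psum q1 k + psum q2 k).
  { intros k. unfold B. rewrite <- psum_plus. apply psum_ext. intros; unfold q1, q2; ring. }
  rewrite (Series_ext _ (fun k => p k * psum q1 k + p k * psum q2 k)).
  2:{ intros; rewrite HB; unfold p; ring. }
  rewrite Series_plus.
  2:{ apply l1_ex, l1_linf; auto. apply psum_linf, l1_ex; auto. }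
  2:{ apply l1_ex, l1_linf; auto. apply psum_linf, l1_ex.
      unfold q2. apply l1_ext with (fun j => x j * (b j * Pre a u j)). intros; ring.
      apply l1_linf; auto. apply linf_mul; auto. apply Pre_linf; auto. }
  rewrite exch; auto.
  set (p' := fun j => b j * x j * tl p (S j)).
  assert (Hp' : in_l1 p').
  { unfold p'. apply l1_ext with (fun j => x j * (b j * tl p (S j))). intros; ring.
    apply l1_linf; auto. apply linf_mul; auto. apply tlS_linf; auto. }
  rewrite exch; auto.
  2:{ unfold q2. apply l1_ext with (fun j => x j * (b j * Pre a u j)). intros; ring.
      apply l1_linf; auto. apply linf_mul; auto. apply Pre_linf; auto. }
  rewrite (Series_ext (fun j => q2 j * tl p (S j)) (fun j => p' j * psum (fun i => u i * a i) j)).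
  2:{ intros; unfold q2, p', Pre; ring. }
  rewrite exch; auto. 2:{ apply l1_linf; auto. }
  rewrite <- Series_plus.
  2:{ apply l1_ex, l1_linf; auto. apply tlS_linf; auto. }
  2:{ apply l1_ex. apply l1_ext with (fun j => u j * (a j * tl p' (S j))). intros; ring.
      apply l1_linf; auto. apply linf_mul; auto. apply tlS_linf; auto. }
  apply Series_ext. intros k. unfold gW, q1. fold p. fold p'. ring.
Qed.

Definition G (a b c x y : rseq) (k : nat) : R :=
  c k * B a b x y k + gW a b c y x k + gW a b c x y k.

Lemma A_rep a b c x y u : in_linf a -> in_linf b -> in_linf c -> in_l1 x -> in_l1 y -> in_l1 u ->
  Aform a b c x y u = pairing u (G a b c x y).
Proof.
  intros Ha Hb Hc Hx Hy Hu. unfold Aform, pairing.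
  rewrite (Series_ext _ (fun k => (u k * (c k * B a b x y k) + (y k * c k) * B a b x u k) + (x k * c k) * B a b y u k)).
  2:{ intros; unfold term; ring. }
  assert (E1 : ex_series (fun k => u k * (c k * B a b x y k))).
  { apply l1_ex, l1_linf; auto. apply linf_mul; auto. apply B_linf; auto. }
  assert (E2 : ex_series (fun k => (y k * c k) * B a b x u k)).
  { apply l1_ex, l1_linf; auto. apply l1_linf; auto. apply B_linf; auto. }
  assert (E3 : ex_series (fun k => (x k * c k) * B a b y u k)).
  { apply l1_ex, l1_linf; auto. apply l1_linf; auto. apply B_linf; auto. }
  rewrite Series_plus; [| apply ex_plus; auto | auto].
  rewrite Series_plus; auto.
  rewrite !W_rep; auto.
  assert (F2 : ex_series (fun k => u k * gW a b c y x k)).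
  { apply l1_ex, l1_linf; auto. apply c0_linf, gW_c0; auto. }
  assert (F3 : ex_series (fun k => u k * gW a b c x y k)).
  { apply l1_ex, l1_linf; auto. apply c0_linf, gW_c0; auto. }
  rewrite <- Series_plus; auto. rewrite <- Series_plus; auto. 2: apply ex_plus; auto.
  apply Series_ext; intros; unfold G; ring.
Qed.

Lemma G_linf a b c x y : in_linf a -> in_linf b -> in_linf c -> in_l1 x -> in_l1 y -> in_linf (G a b c x y).
Proof.
  intros. unfold G. apply linf_plus; [apply linf_plus|].
  apply linf_mul; auto; apply B_linf; auto.
  all: apply c0_linf, gW_c0; auto.
Qed.

Lemma z_ext (z : rseq -> R) (f g : rseq) : (forall n, f n = g n) -> z f = z g.
Proof. intros H. f_equal. now apply functional_extensionality. Qed.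

Lemma linf_const t : in_linf (fun _ => t).
Proof. exists (Rabs t). intros; lra. Qed.

Lemma linf_scal t f : in_linf f -> in_linf (fun n => t * f n).
Proof. intros; apply (linf_mul (fun _ => t) f); auto using linf_const. Qed.

Lemma perp_lin (z : rseq -> R) (f g : rseq) t : c0_perp z -> in_linf f -> in_c0 g -> z (fun n => t * f n + g n) = t * z f.
Proof.
  intros [[Hadd [Hsc _]] H0] Hf Hg.
  rewrite (Hadd (fun n => t * f n) g).
  - rewrite Hsc by auto. rewrite (H0 g Hg). ring.
  - apply linf_scal; auto.
  - apply c0_linf; auto.
Qed.

Lemma G_z a b c x y (z : rseq -> R) : in_linf a -> in_linf b -> in_linf c -> in_l1 x -> in_l1 y -> c0_perp z ->
  z (G a b c x y) = z c * Binf a b x y.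
Proof.
  intros Ha Hb Hc Hx Hy Hz.
  rewrite (z_ext z _ (fun n => Binf a b x y * c n + (c n * (B a b x y n - Binf a b x y) + (gW a b c y x n + gW a b c x y n)))).
  2:{ intros; unfold G; ring. }
  rewrite perp_lin; auto. ring.
  apply c0_plus. apply c0_mul; auto. unfold in_c0.
  replace 0 with (Binf a b x y - Binf a b x y) by ring. apply is_lim_seq_minus'. apply B_lim; auto. apply is_lim_seq_const.
  apply c0_plus; apply gW_c0; auto.
Qed.

Definition Hfun (a b x : rseq) (k : nat) : R :=
  b k * Pre a x k + a k * tl (fun j => b j * x j) (S k).

Lemma Binf_rep a b x y : in_linf a -> in_linf b -> in_l1 x -> in_l1 y ->
  Binf a b x y = pairing y (Hfun a b x).
Proof.
  intros Ha Hb Hx Hy. unfold Binf, pairing.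
  assert (Hp : in_l1 (fun j => b j * x j)).
  { apply l1_ext with (fun j => x j * b j). intros; ring. apply l1_linf; auto. }
  rewrite (Series_ext _ (fun j => y j * (b j * Pre a x j) + (b j * x j) * psum (fun i => y i * a i) j)).
  2:{ intros; unfold Pre; ring. }
  rewrite Series_plus.
  2:{ apply l1_ex, l1_linf; auto. apply linf_mul; auto. apply Pre_linf; auto. }
  2:{ apply l1_ex, l1_linf; auto. apply psum_linf, l1_ex, l1_linf; auto. }
  rewrite exch; auto. 2:{ apply l1_linf; auto. }
  rewrite <- Series_plus.
  2:{ apply l1_ex, l1_linf; auto. apply linf_mul; auto. apply Pre_linf; auto. }
  2:{ apply l1_ex. apply l1_ext with (fun j => y j * (a j * tl (fun j => b j * x j) (S j))). intros; ring.
      apply l1_linf; auto. apply linf_mul; auto. apply tlS_linf; auto. }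
  apply Series_ext; intros; unfold Hfun; ring.
Qed.

Lemma Hfun_linf a b x : in_linf a -> in_linf b -> in_l1 x -> in_linf (Hfun a b x).
Proof.
  intros Ha Hb Hx. unfold Hfun. apply linf_plus. apply linf_mul; auto. apply Pre_linf; auto.
  apply linf_mul; auto. apply tlS_linf. apply l1_ext with (fun j => x j * b j). intros; ring. apply l1_linf; auto.
Qed.

Lemma Hfun_z a b x (z : rseq -> R) : in_linf a -> in_linf b -> in_l1 x -> c0_perp z ->
  z (Hfun a b x) = z b * pairing x a.
Proof.
  intros Ha Hb Hx Hz.
  rewrite (z_ext z _ (fun n => pairing x a * b n + (b n * (Pre a x n - pairing x a) + a n * tl (fun j => b j * x j) (S n)))).
  2:{ intros; unfold Hfun; ring. }
  rewrite perp_lin; auto. ring.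
  apply c0_plus. apply c0_mul; auto. unfold in_c0.
  replace 0 with (pairing x a - pairing x a) by ring. apply is_lim_seq_minus'. apply Pre_lim; auto. apply is_lim_seq_const.
  apply c0_mul; auto. apply c0_shift, tl_c0, l1_ex. apply l1_ext with (fun j => x j * b j). intros; ring. apply l1_linf; auto.
Qed.

Lemma net_lim_ext {I : Type} (le : I -> I -> Prop) v w L L' :
  (forall i, v i = w i) -> L = L' -> net_lim le v L -> net_lim le w L'.
Proof. intros H E N eps he. destruct (N eps he) as [i0 Hi]. exists i0. intros i hi. rewrite <- H, <- E. auto. Qed.

Lemma net_lim_scal {I : Type} (le : I -> I -> Prop) v L t :
  net_lim le v L -> net_lim le (fun i => t * v i) (t * L).
Proof.
  intros N eps he.
  assert (h : 0 < eps / (Rabs t + 1)). { apply Rdiv_lt_0_compat; auto. pose proof (Rabs_pos t); lra. }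
  destruct (N _ h) as [i0 Hi]. exists i0. intros i hi. specialize (Hi i hi).
  replace (t * v i - t * L) with (t * (v i - L)) by ring. rewrite Rabs_mult.
  pose proof (Rabs_pos t). pose proof (Rabs_pos (v i - L)).
  apply Rle_lt_trans with (Rabs t * (eps / (Rabs t + 1))).
  apply Rmult_le_compat_l; lra.
  apply Rlt_le_trans with ((Rabs t + 1) * (eps / (Rabs t + 1))).
  apply Rmult_lt_compat_r; lra. right; field; lra.
Qed.

Lemma l1norm_nonneg x : in_l1 x -> 0 <= l1norm x.
Proof. intros H. pose proof (psum_le_Series (fun n => Rabs (x n)) O (fun n => Rabs_pos _) H). simpl in H0. exact H0. Qed.

Lemma psum_abs_le x N : in_l1 x -> psum (fun n => Rabs (x n)) N <= l1norm x.
Proof. intros H. apply psum_le_Series; auto. intros; apply Rabs_pos. Qed.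

Lemma Pre_bound a x Ma j : (forall n, Rabs (a n) <= Ma) -> 0 <= Ma -> in_l1 x ->
  Rabs (Pre a x j) <= Ma * l1norm x.
Proof.
  intros Ha HM Hx. unfold Pre. eapply Rle_trans. apply psum_abs.
  eapply Rle_trans. apply (psum_le _ (fun n => Ma * Rabs (x n))).
  intros n. rewrite Rabs_mult, (Rmult_comm Ma). apply Rmult_le_compat_l; auto using Rabs_pos.
  rewrite psum_scal. apply Rmult_le_compat_l; auto. apply psum_abs_le; auto.
Qed.

Lemma B_bound a b x y Ma Mb k : (forall n, Rabs (a n) <= Ma) -> 0 <= Ma ->
  (forall n, Rabs (b n) <= Mb) -> 0 <= Mb -> in_l1 x -> in_l1 y ->
  Rabs (B a b x y k) <= 2 * Ma * Mb * l1norm x * l1norm y.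
Proof.
  intros Ha HMa Hb HMb Hx Hy. unfold B. eapply Rle_trans. apply psum_abs.
  pose proof (l1norm_nonneg x Hx). pose proof (l1norm_nonneg y Hy).
  eapply Rle_trans. apply (psum_le _ (fun n => (Mb * Ma * l1norm x) * Rabs (y n) + (Mb * Ma * l1norm y) * Rabs (x n))).
  - intros n. rewrite Rabs_mult. eapply Rle_trans. apply Rmult_le_compat; [apply Rabs_pos|apply Rabs_pos|apply Hb|apply Rabs_triang].
    rewrite !Rabs_mult.
    pose proof (Pre_bound a x Ma n Ha HMa Hx). pose proof (Pre_bound a y Ma n Ha HMa Hy).
    pose proof (Rabs_pos (y n)). pose proof (Rabs_pos (x n)).
    assert (Rabs (y n) * Rabs (Pre a x n) <= Rabs (y n) * (Ma * l1norm x)) by (apply Rmult_le_compat_l; auto).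
    assert (Rabs (x n) * Rabs (Pre a y n) <= Rabs (x n) * (Ma * l1norm y)) by (apply Rmult_le_compat_l; auto).
    assert (Mb * (Rabs (y n) * Rabs (Pre a x n) + Rabs (x n) * Rabs (Pre a y n)) <= Mb * (Rabs (y n) * (Ma * l1norm x) + Rabs (x n) * (Ma * l1norm y))) by (apply Rmult_le_compat_l; lra).
    nra.
  - rewrite psum_plus, !psum_scal.
    pose proof (psum_abs_le x k Hx). pose proof (psum_abs_le y k Hy).
    assert (0 <= Mb * Ma) by nra.
    assert (Mb * Ma * l1norm x * psum (fun n => Rabs (y n)) k <= Mb * Ma * l1norm x * l1norm y) by (apply Rmult_le_compat_l; nra).
    assert (Mb * Ma * l1norm y * psum (fun n => Rabs (x n)) k <= Mb * Ma * l1norm y * l1norm x) by (apply Rmult_le_compat_l; nra).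
    nra.
Qed.

Lemma A_bound a b c x y u Ma Mb Mc : (forall n, Rabs (a n) <= Ma) -> 0 <= Ma ->
  (forall n, Rabs (b n) <= Mb) -> 0 <= Mb -> (forall n, Rabs (c n) <= Mc) -> 0 <= Mc ->
  in_l1 x -> in_l1 y -> in_l1 u ->
  Rabs (Aform a b c x y u) <= 6 * Ma * Mb * Mc * l1norm x * l1norm y * l1norm u.
Proof.
  intros Ha HMa Hb HMb Hc HMc Hx Hy Hu.
  pose proof (l1norm_nonneg x Hx). pose proof (l1norm_nonneg y Hy). pose proof (l1norm_nonneg u Hu).
  set (K := 2 * Ma * Mb). assert (0 <= K) by (unfold K; nra).
  set (bd := fun k => (Mc * K * l1norm x * l1norm y) * Rabs (u k) + (Mc * K * l1norm x * l1norm u) * Rabs (y k)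
                      + (Mc * K * l1norm y * l1norm u) * Rabs (x k)).
  assert (Ebd : ex_series bd).
  { unfold bd. apply ex_plus; [apply ex_plus|]; apply ex_scal; auto. }
  assert (Hle : forall k, Rabs (term a b c x y u k) <= bd k).
  { intros k. unfold term, bd. rewrite Rabs_mult.
    pose proof (B_bound a b x y Ma Mb k Ha HMa Hb HMb Hx Hy).
    pose proof (B_bound a b x u Ma Mb k Ha HMa Hb HMb Hx Hu).
    pose proof (B_bound a b y u Ma Mb k Ha HMa Hb HMb Hy Hu).
    fold K in H3, H4, H5.
    set (s := u k * B a b x y k + y k * B a b x u k + x k * B a b y u k).
    assert (Rabs s <= Rabs (u k) * (K * l1norm x * l1norm y) + Rabs (y k) * (K * l1norm x * l1norm u) + Rabs (x k) * (K * l1norm y * l1norm u)).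
    { unfold s. eapply Rle_trans. apply Rabs_triang. eapply Rle_trans. apply Rplus_le_compat_r. apply Rabs_triang.
      rewrite !Rabs_mult.
      assert (Rabs (u k) * Rabs (B a b x y k) <= Rabs (u k) * (K * l1norm x * l1norm y)) by (apply Rmult_le_compat_l; auto using Rabs_pos; replace (K * l1norm x * l1norm y) with (2 * Ma * Mb * l1norm x * l1norm y) by (unfold K; ring); auto).
      assert (Rabs (y k) * Rabs (B a b x u k) <= Rabs (y k) * (K * l1norm x * l1norm u)) by (apply Rmult_le_compat_l; auto using Rabs_pos; replace (K * l1norm x * l1norm u) with (2 * Ma * Mb * l1norm x * l1norm u) by (unfold K; ring); auto).
      assert (Rabs (x k) * Rabs (B a b y u k) <= Rabs (x k) * (K * l1norm y * l1norm u)) by (apply Rmult_le_compat_l; auto using Rabs_pos; replace (K * l1norm y * l1norm u) with (2 * Ma * Mb * l1norm y * l1norm u) by (unfold K; ring); auto).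
      lra. }
    eapply Rle_trans. apply Rmult_le_compat; [apply Rabs_pos|apply Rabs_pos|apply Hc|apply H6].
    right; ring. }
  eapply Rle_trans. apply Series_Rabs. apply (ex_le _ bd); auto. intros; rewrite Rabs_Rabsolu; auto.
  eapply Rle_trans. apply Series_le; [intros; split; [apply Rabs_pos| apply Hle] | exact Ebd].
  unfold bd. simpl. rewrite Series_plus; [| apply ex_plus; apply ex_scal; auto | apply ex_scal; auto].
  rewrite Series_plus; [| apply ex_scal; auto | apply ex_scal; auto].
  rewrite !Series_scal_l. fold (l1norm u) (l1norm y) (l1norm x). unfold K. right; ring.
Qed.

Theorem lemma3p3 (a b c : rseq) :
  in_linf a -> in_linf b -> in_linf c ->
  exists A : rseq -> rseq -> rseq -> R,
    continuous_trilinear_l1 A /\ symmetric_l1 A /\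
    forall z1 z2 z3 : rseq -> R,
      bidual z1 -> c0_perp z2 -> c0_perp z3 ->
      aron_berner_eq A z1 z2 z3 (z1 a * z2 b * z3 c).
Proof.
  intros Ha Hb Hc.
  destruct (linf_pos a Ha) as [Ma [HMa Ha']].
  destruct (linf_pos b Hb) as [Mb [HMb Hb']].
  destruct (linf_pos c Hc) as [Mc [HMc Hc']].
  exists (Aform a b c). split; [split|split].
  - unfold trilinear_l1, Aform. repeat split.
    + intros x x' y u Hx Hx' Hy Hu.
      rewrite (Series_ext _ (fun k => term a b c x y u k + term a b c x' y u k)) by (intros; apply term_plus).
      apply Series_plus; apply term_ex; auto.
    + intros t x y u Hx Hy Hu.
      rewrite (Series_ext _ (fun k => t * term a b c x y u k)) by (intros; apply term_scal).
      apply Series_scal_l.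
    + intros x y y' u Hx Hy Hy' Hu.
      rewrite (Series_ext _ (fun k => term a b c x y u k + term a b c x y' u k)).
      apply Series_plus; apply term_ex; auto.
      intros k. rewrite term_sym12, term_plus, (term_sym12 _ _ _ y), (term_sym12 _ _ _ y'). ring.
    + intros t x y u Hx Hy Hu.
      rewrite (Series_ext _ (fun k => t * term a b c x y u k)). apply Series_scal_l.
      intros k. rewrite term_sym12, term_scal, (term_sym12 _ _ _ y). ring.
    + intros x y u u' Hx Hy Hu Hu'.
      rewrite (Series_ext _ (fun k => term a b c x y u k + term a b c x y u' k)).
      apply Series_plus; apply term_ex; auto.
      intros k. rewrite term_sym13, term_plus, (term_sym13 _ _ _ u), (term_sym13 _ _ _ u'). ring.
    + intros t x y u Hx Hy Hu.
      rewrite (Series_ext _ (fun k => t * term a b c x y u k)). apply Series_scal_l.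
      intros k. rewrite term_sym13, term_scal, (term_sym13 _ _ _ u). ring.
  - exists (6 * Ma * Mb * Mc). intros x y u Hx Hy Hu. apply A_bound; auto.
  - intros x y u Hx Hy Hu. unfold Aform. repeat split; apply Series_ext; intros k.
    apply term_sym12. apply term_sym23. apply term_sym13.
  - intros z1 z2 z3 Hz1 Hz2 Hz3 I J K leI leJ leK x y u _ _ _ [Hx Wx] [Hy Wy] [Hu Wu].
    exists (fun i j => z3 c * Binf a b (x i) (y j)), (fun i => z3 c * (z2 b * pairing (x i) a)).
    split; [|split].
    + intros i j.
      apply net_lim_ext with (fun k => pairing (u k) (G a b c (x i) (y j))) (z3 (G a b c (x i) (y j))).
      intros k; rewrite A_rep; auto.
      apply G_z; auto.
      apply Wu. apply G_linf; auto.
    + intros i.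
      apply net_lim_ext with (fun j => z3 c * pairing (y j) (Hfun a b (x i))) (z3 c * z2 (Hfun a b (x i))).
      intros j; rewrite Binf_rep; auto.
      rewrite Hfun_z; auto.
      apply net_lim_scal, Wy. apply Hfun_linf; auto.
    + apply net_lim_ext with (fun i => (z3 c * z2 b) * pairing (x i) a) ((z3 c * z2 b) * z1 a).
      intros; ring. ring.
      apply net_lim_scal, Wx; auto.
Qed.
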